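(* Let $p$ be an odd prime and $X,Y\in\mathcal{X}_p$. Then $X\subseteq Y$ if and only if $i(Y)$ divides $i(X)$.
   Context: $\mathbb{N}=\{1,2,\dots\}$, $\mathbb{N}_0=\{0\}\cup\mathbb{N}$, $x^{\mathbb{N}}=\{x^k:k\in\mathbb{N}\}$. $\mathbb{Z}_{p^n}=\mathbb{Z}/p^n\mathbb{Z}$ with unit group $\mathbb{Z}_{p^n}^\times$, and $\pi_n:\mathbb{N}\to\mathbb{Z}_{p^n}$, $x\mapsto x+p^n\mathbb{Z}$. The $p$-adic topology on $\mathbb{N}\setminus p\mathbb{N}$ is generated by the sets $x+p^m\mathbb{N}_0$. $\mathcal{X}_p=\{\overline{a^{\mathbb{N}}}:a\in\mathbb{N}\setminus p\mathbb{N},\ a\ne1\}$, closures in the $p$-adic topology on $\mathbb{N}\setminus p\mathbb{N}$. For $X\in\mathcal{X}_p$, $n(X)=\min\{n\in\mathbb{N}: X=\pi_n^{-1}(\pi_n(X)),\ |\pi_n(X)|\ge\max\{p,3\}\}$ (this is well defined, and $\pi_{n(X)}(X)$ is a cyclic subgroup of $\mathbb{Z}_{p^{n(X)}}^\times$), and $i(X)$ is the index of the subgroup $\pi_{n(X)}(X)$ in $\mathbb{Z}_{p^{n(X)}}^\times$. *)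

(* Defs.v *)
From HB Require Import structures.
From mathcomp Require Import all_boot all_order all_algebra all_fingroup.
From mathcomp Require Import boolp classical_sets.

Set Implicit Arguments.
Unset Strict Implicit.
Unset Printing Implicit Defensive.

(* The closure of a^N = {a^k : k >= 1} in N \ pN for the p-adic topology,
   whose basic open sets are x + p^m N_0:  x lies in the closure iff
   x is in N \ pN and every basic neighbourhood x + p^m N_0 of x meets a^N. *)
Definition adic_closure_pow (p a : nat) : set nat :=
  fun x => [/\ 0 < x, ~~ (p %| x) &
     forall m : nat, exists k : nat,
       [/\ 0 < k, x <= a ^ k & a ^ k = x %[mod p ^ m]]].

Definition in_calX (p : nat) (X : set nat) : Prop :=
  exists a : nat, [/\ 0 < a, ~~ (p %| a), a != 1 & X = adic_closure_pow p a].

(* pi_n(X) as a subset of Z_{p^n}  (n >= 1 and p >= 2 so that p^n >= 2) *)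
Definition piX (p n : nat) (X : set nat) : {set 'Z_(p ^ n)} :=
  [set r : 'Z_(p ^ n) | `[< exists x : nat, X x /\ ((x%:R)%R : 'Z_(p ^ n)) = r >]].

Definition piX_units (p n : nat) (X : set nat) : {set {unit 'Z_(p ^ n)}} :=
  [set u : {unit 'Z_(p ^ n)} |
     `[< exists x : nat, X x /\ ((x%:R)%R : 'Z_(p ^ n)) = val u >]].

Definition n_admissible (p : nat) (X : set nat) (n : nat) : Prop :=
  [/\ 0 < n,
      (forall x : nat, 0 < x -> (X x <-> ((x%:R)%R : 'Z_(p ^ n)) \in piX p n X))
    & maxn p 3 <= #|piX p n X| ].

(* n(X): the least admissible n (well defined by the paper; 0 otherwise) *)
Definition nX (p : nat) (X : set nat) : nat :=
  xget 0%N (fun n => n_admissible p X n /\ forall m, n_admissible p X m -> n <= m).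

Definition iX (p : nat) (X : set nat) : nat :=
  (#| [set: {unit 'Z_(p ^ nX p X)}] : piX_units p (nX p X) X |)%g.

(* Main.v *)
Require Import Defs.
From HB Require Import structures.
From mathcomp Require Import all_boot all_order all_algebra all_fingroup.
From mathcomp Require Import boolp classical_sets.
From mathcomp Require Import all_solvable.
From mathcomp Require Import ring zify.
Set Implicit Arguments. Unset Strict Implicit. Unset Printing Implicit Defensive.
Import Order.TTheory GRing.Theory Num.Theory FinRing.Theory.

Lemma modn_cg (d x y : nat) :
  x = y %[mod d] <-> exists z : int, (Posz x = Posz y + z * Posz d)%R.
Proof.
have E : (x = y %[mod d]) <-> ((Posz x) == (Posz y) %[mod (Posz d)])%Z.
  by rewrite !modz_nat; split => [->//|/eqP[]].
rewrite E eqz_mod_dvd; split.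
  by case/dvdzP => z Hz; exists z; rewrite -Hz; ring.
by case=> z ->; apply/dvdzP; exists z; ring.
Qed.

Lemma binom2 (T s : nat) : exists r, (1 + T) ^ s = 1 + s * T + T ^ 2 * r.
Proof.
elim: s => [|s [r IH]]; first by exists 0; rewrite expn0; lia.
exists (s + r + r * T); rewrite expnS IH; ring.
Qed.

Section U.
Local Open Scope ring_scope.
Definition uz (q a : nat) : {unit 'Z_q} := insubd (1%g : {unit 'Z_q}) (a%:R : 'Z_q).

Lemma val_uz q a : (1 < q)%N -> coprime q a -> val (uz q a) = a%:R.
Proof. by move=> q1 co; rewrite /uz insubdK // unitZpE. Qed.

Lemma val_uzX q a k : (1 < q)%N -> coprime q a -> val (uz q a ^+ k)%g = (a ^ k)%N%:R.
Proof. by move=> q1 co; rewrite val_unitX val_uz // natrX. Qed.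

Lemma eqZ q x y : (1 < q)%N -> ((x%:R : 'Z_q) = y%:R) <-> (x = y %[mod q])%N.
Proof.
move=> q1; split => [E|E].
  by have := congr1 (@nat_of_ord _) E; rewrite !val_Zp_nat.
by apply: val_inj; rewrite /= !val_Zp_nat.
Qed.

Lemma uzX_eq1 q a k : (1 < q)%N -> coprime q a ->
  ((uz q a ^+ k)%g == 1%g) = ((a ^ k)%N == 1 %[mod q]).
Proof.
move=> q1 co; apply/eqP/eqP => [E|E].
  by apply/(eqZ _ _ q1); rewrite -val_uzX // E.
by apply: val_inj; rewrite val_uzX //= (proj2 (eqZ _ _ q1) E).
Qed.

Lemma uzX_eq q a b k j : (1 < q)%N -> coprime q a -> coprime q b ->
  ((uz q a ^+ k)%g = (uz q b ^+ j)%g) <-> ((a ^ k = b ^ j %[mod q])%N).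
Proof.
move=> q1 ca cb; split => [E|E].
  by apply/(eqZ _ _ q1); rewrite -!val_uzX // E.
by apply: val_inj; rewrite !val_uzX //; apply/(eqZ _ _ q1).
Qed.

Lemma euler q a : (1 < q)%N -> coprime q a -> (a ^ totient q = 1 %[mod q])%N.
Proof.
move=> q1 co; apply/eqP; rewrite -uzX_eq1 //.
by rewrite -card_units_Zp ?(ltnW q1) // expg_cardG ?inE.
Qed.
End U.
Lemma lte1 (p m t : nat) : prime p -> odd p -> 0 < m ->
  exists s, (1 + t * p ^ m) ^ p = 1 + (t + s * p) * p ^ m.+1.
Proof.
move=> pp op m0.
have p3 : 3 <= p.
  have := prime_gt1 pp; case: p pp op => [|[|[|]]] //.
have [D [HD dD]] : exists D, (1 + t * p ^ m) ^ p = 1 + p * (t * p ^ m) + D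
                    /\ p ^ m.+2 %| D.
  case: p pp op p3 => [|[|p]] // pp op p3.
  rewrite (expnDn 1) big_ord_recl big_ord_recl /=.
  rewrite bin0 bin1 !exp1n !mul1n !expn0 expn1 addnA.
  eexists; split; first reflexivity.
  apply: dvdn_sum => -[i ip] _ /=.
  rewrite exp1n mul1n /bump /= !add1n expnMn -expnM.
  have [ilt|ige] := ltnP i.+2 p.+2.
    rewrite mulnA (mulnC _ (t ^ _)) -mulnA dvdn_mull //.
    rewrite expnS; apply: dvdn_mul.
      by apply: prime_dvd_bin; rewrite /bump /=; lia.
    by rewrite dvdn_exp2l // mulnC /= !mulSn; lia.
  have -> : i = p by lia.
  rewrite binn mul1n dvdn_mull // dvdn_exp2l //; nia.
case/dvdnP: dD => s Hs.
exists s; rewrite HD Hs !expnS; ring.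
Qed.
Section Cyc.
Local Open Scope group_scope.
Lemma units_cyc (p n : nat) : prime p -> odd p -> (0 < n)%N ->
  cyclic [set: {unit 'Z_(p ^ n)}].
Proof.
move=> pp op n0.
have q1 : (1 < p ^ n)%N by rewrite -(expn0 p) ltn_exp2l ?prime_gt1.
pose a : 'Z_(p ^ n) := Zp1.
have oa : #[a] = (p ^ n)%N by rewrite order_Zp1 Zp_cast.
have pG : p.-group <[a]> by rewrite /pgroup -/#[a] oa pnatX pnat_id.
have cG : cyclic <[a]> by apply: cycle_cyclic.
have ntG : <[a]> :!=: 1 by rewrite cycle_eq1 -order_eq1 oa neq_ltn q1 orbT.
have cA : cyclic (Aut <[a]>).
  have [m [_ [_ cF _ _]]] := cyclic_pgroup_Aut_structure pG cG ntG.
  case: eqP => [_ -> //|_ [t [_ _ _]]].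
  by rewrite op => -[[]].
have := isog_cyclic (Zp_unit_isog a); rewrite cA oa Zp_cast //.
Qed.
End Cyc.

Lemma lte_iter p v t j : prime p -> odd p -> 0 < v -> ~~ (p %| t) ->
  exists t', ~~ (p %| t') /\ (1 + t * p ^ v) ^ (p ^ j) = 1 + t' * p ^ (v + j).
Proof.
move=> pp op v0 nt; elim: j => [|j [t' [nt' IH]]].
  by exists t; rewrite expn0 expn1 addn0.
have [s Hs] := lte1 t' pp op (ltn_addr j v0).
exists (t' + s * p); split.
  by rewrite dvdn_addl ?dvdn_mull.
by rewrite expnSr expnM IH Hs addnS.
Qed.

Lemma stepS p m t' B A x : prime p -> 0 < m -> ~~ (p %| t') -> ~~ (p %| A) ->
  B = 1 + t' * p ^ m -> x = A %[mod p ^ m] -> exists s, x = A * B ^ s %[mod p ^ m.+1].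
Proof.
move=> pp m0 nt nA -> /modn_cg [c Hc].
have cop : coprime p (A * t') by rewrite prime_coprime // Euclid_dvdM // negb_or nA.
have [u [w Huw]] := Bezoutz (Posz p) (Posz (A * t')).
have g1 : gcdz (Posz p) (Posz (A * t')) = 1%R by rewrite /gcdz /= (eqP cop).
rewrite g1 in Huw.
have p0 : (0 < Posz p)%R by rewrite ltz_nat prime_gt0.
pose s := `|((c * w) %% Posz p)%Z|%N.
have Hs : Posz s = ((c * w) %% Posz p)%Z.
  by rewrite /s gez0_abs // modz_ge0 // gt_eqF.
have Hcw := divz_eq (c * w) (Posz p).
set Q := ((c * w) %/ Posz p)%Z in Hcw.
exists s.
have [r Hr] := binom2 (t' * p ^ m) s.
apply/modn_cg.
case: m m0 Hc Hr => // m _ Hc Hr.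
rewrite Hr.
exists (c * u + Posz A * Posz t' * Q - Posz A * Posz t' ^+ 2 * Posz r * Posz (p ^ m))%R.
rewrite Hc !expnSr.
rewrite !(PoszD, PoszM).
rewrite expn0.
rewrite -Hs in Hcw.
have -> : Posz s = (c * w - Q * Posz p)%R by rewrite Hcw; ring.
rewrite PoszM in Huw.
rewrite -[X in (_ + X * _)%R = _](mulr1 c) -Huw.
rewrite ?PoszM.
rewrite (_ : Posz 1 = 1%R) //.
ring.
Qed.

Lemma cong_dvd d q x y : d %| q -> x = y %[mod q] -> x = y %[mod d].
Proof. by move=> dq E; rewrite -(modn_dvdm x dq) E modn_dvdm. Qed.

Lemma cong_pow p m n x y : m <= n -> x = y %[mod p ^ n] -> x = y %[mod p ^ m].
Proof. by move=> mn; apply: cong_dvd; rewrite dvdn_exp2l. Qed.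

Lemma stab p a : prime p -> odd p -> 0 < a -> ~~ (p %| a) -> a != 1 ->
  exists N, 0 < N /\ forall x, (exists k, x = a ^ k %[mod p ^ N]) ->
     forall m, exists k, x = a ^ k %[mod p ^ m].
Proof.
move=> pp op a0 na a1.
have p1 := prime_gt1 pp.
have cpa : coprime p a by rewrite prime_coprime.
pose b := a ^ p.-1.
have b1 : b = 1 %[mod p].
  by rewrite /b -(totient_prime pp) euler.
have b2 : 1 < b.
  have e0 : 0 < p.-1 by lia.
  by rewrite /b -(exp1n p.-1) ltn_exp2r //; lia.
have b0 : 0 < b - 1 by lia.
have [t ct Ht] := pfactor_coprime pp b0.
set v := logn p (b - 1) in Ht.
have nt : ~~ (p %| t) by rewrite -prime_coprime.
have v0 : 0 < v.
  rewrite lt0n; apply/negP => /eqP v0; move: Ht; rewrite v0 muln1 => Ht.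
  move/eqP: b1; rewrite eqn_mod_dvd ?(ltnW b2) // Ht.
  by rewrite (negbTE nt).
have Eb : b = 1 + t * p ^ v by lia.
exists v; split => // x [k0 Hk0].
have H : forall i, exists k, x = a ^ k %[mod p ^ (v + i)].
  elim=> [|i [k Hk]]; first by exists k0; rewrite addn0.
  have [t' [nt' Ht']] := lte_iter i pp op v0 nt.
  have nak : ~~ (p %| a ^ k) by rewrite Euclid_dvdX // negb_and na.
  have [s Hs] := stepS pp (ltn_addr i v0) nt' nak Ht' Hk.
  exists (k + p.-1 * p ^ i * s).
  by rewrite [a ^ _]expnD [a ^ (_ * _)]expnM [a ^ (_ * _)]expnM -/b Eb addnS Hs.
move=> m; have [mv|vm] := leqP m v.
  by exists k0; apply: cong_pow mv Hk0.
have [k Hk] := H (m - v); exists k; move: Hk.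
by rewrite subnKC // ltnW.
Qed.

Lemma closure_iff p a x : prime p -> 0 < a -> ~~ (p %| a) -> a != 1 ->
  adic_closure_pow p a x <-> (0 < x /\ forall m, exists k, x = a ^ k %[mod p ^ m]).
Proof.
move=> pp a0 na a1; split.
  by case=> x0 _ H; split => // m; have [k [_ _ Hk]] := H m; exists k.
case=> x0 H; split => //.
  have [k Hk] := H 1; rewrite expn1 in Hk.
  by rewrite /dvdn Hk -/(dvdn p (a ^ k)) Euclid_dvdX // negb_and na.
move=> m; have [k Hk] := H m.
have q1 : 1 < p ^ m.+1 by rewrite -(expn0 p) ltn_exp2l ?prime_gt1.
pose T := totient (p ^ m.+1).
have T0 : 0 < T by rewrite totient_gt0 ltnW.
have cq : coprime (p ^ m.+1) a by rewrite coprime_pexpl // prime_coprime.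
have ET := euler q1 cq.
have a2 : 1 < a by lia.
exists (k + T * x.+1); split.
- by rewrite ltn_addl // muln_gt0 T0.
- apply: leq_trans (ltnW (ltn_expl x a2)) _.
  rewrite leq_pexp2l //; apply: leq_trans (leq_addl k _).
  exact: leq_trans (leqnSn x) (leq_pmull _ T0).
- rewrite Hk; apply: (@cong_pow p m m.+1 _ _ (leqnSn m)).
  by rewrite expnD expnM -modnMmr -modnXm ET (modn_small q1) exp1n modnMmr muln1.
Qed.

Lemma cl_pow p a j : prime p -> 0 < a -> ~~ (p %| a) -> a != 1 -> 0 < j ->
  adic_closure_pow p a (a ^ j).
Proof.
move=> pp a0 na a1 j0; apply/closure_iff => //; split.
  by rewrite expn_gt0 a0.
by move=> m; exists j.
Qed.

Lemma cl_coprime p a x n : prime p -> adic_closure_pow p a x -> coprime (p ^ n) x.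
Proof. by move=> pp [_ nx _]; apply: coprimeXl; rewrite prime_coprime. Qed.

Lemma pos_rep q a k : 1 < q -> coprime q a -> exists2 j, 0 < j & a ^ j = a ^ k %[mod q].
Proof.
move=> q1 cq; exists (k + totient q).
  by rewrite ltn_addl // totient_gt0 ltnW.
by rewrite expnD -modnMmr euler // (modn_small q1) muln1.
Qed.

Section Grp.
Variables (p a : nat).
Hypotheses (pp : prime p) (a0 : 0 < a) (na : ~~ (p %| a)) (a1 : a != 1).
Local Notation X := (adic_closure_pow p a).

Lemma q1 n : 0 < n -> 1 < p ^ n.
Proof. by move=> n0; rewrite -(expn0 p) ltn_exp2l ?prime_gt1. Qed.

Lemma cpa n : coprime (p ^ n) a.
Proof. by apply: coprimeXl; rewrite prime_coprime. Qed.

Lemma piXu n : 0 < n -> piX_units p n X = <[uz (p ^ n) a]>%g.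
Proof.
move=> n0; have Q1 := q1 n0; have ca := cpa n.
apply/setP => u; rewrite inE; apply/asboolP/idP.
  case=> x [Xx Ex].
  have [k [_ _ Hk]] := (let: And3 _ _ H := Xx in H) n.
  apply/cycleP; exists k; apply: val_inj; rewrite val_uzX // -Ex.
  by apply/eqZ.
case/cycleP => k ->.
have [j j0 Hj] := pos_rep k Q1 ca.
exists (a ^ j); split; first exact: cl_pow.
by rewrite val_uzX //; apply/eqZ.
Qed.

Lemma piX_img n : 0 < n -> piX p n X = [set val u | u in piX_units p n X].
Proof.
move=> n0; have Q1 := q1 n0.
apply/setP => r; rewrite inE; apply/asboolP/imsetP.
  case=> x [Xx Ex]; exists (uz (p ^ n) x).
    by rewrite inE; apply/asboolP; exists x; rewrite val_uz // (cl_coprime _ pp Xx).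
  by rewrite val_uz // (cl_coprime _ pp Xx).
case=> u; rewrite inE => /asboolP [x [Xx Ex]] ->; by exists x.
Qed.

Lemma piX_card n : 0 < n -> #|piX p n X| = #[uz (p ^ n) a]%g.
Proof.
move=> n0; rewrite piX_img // card_imset; last exact: val_inj.
by rewrite piXu.
Qed.

Lemma memPiX n x : 0 < n ->
  ((x%:R : 'Z_(p ^ n))%R \in piX p n X) <-> exists k, x = a ^ k %[mod p ^ n].
Proof.
move=> n0; have Q1 := q1 n0; rewrite inE; split.
  case/asboolP => y [Xy /eqZ Ey].
  have [k [_ _ Hk]] := (let: And3 _ _ H := Xy in H) n.
  by exists k; rewrite -Ey // Hk.
case=> k Hk; apply/asboolP.
have [j j0 Hj] := pos_rep k Q1 (cpa n).
exists (a ^ j); split; first exact: cl_pow.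
by apply/eqZ => //; rewrite Hj Hk.
Qed.

Definition Pre n := forall x, 0 < x -> (exists k, x = a ^ k %[mod p ^ n]) -> X x.

Lemma adm_pre n : n_admissible p X n -> Pre n.
Proof.
case=> n0 H _ x x0 Hk; apply/(H x x0); exact/memPiX.
Qed.

Lemma pre_adm n : odd p -> 0 < n -> Pre n -> p <= #|piX p n X| -> n_admissible p X n.
Proof.
move=> op n0 Pn card; split => //.
  move=> x x0; split => [Xx|/memPiX Hx]; last exact: Pn (Hx n0).
  rewrite inE; apply/asboolP; by exists x.
have p3 : 3 <= p.
  have := prime_gt1 pp; case: p pp op {Pn card} => [|[|[|]]] //.
by rewrite (maxn_idPl p3).
Qed.

Lemma pre_succ n : Pre n -> Pre n.+1.
Proof.
move=> Pn x x0 [k Hk]; apply: Pn x0 _; exists k; exact: cong_pow (leqnSn n) Hk.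
Qed.

End Grp.

Section Ord.
Variables (p a : nat).
Hypotheses (pp : prime p) (op : odd p) (a0 : 0 < a) (na : ~~ (p %| a)) (a1 : a != 1).
Local Notation X := (adic_closure_pow p a).

Lemma ord_succ n : 0 < n -> Pre p a n ->
  #[uz (p ^ n.+1) a]%g = p * #[uz (p ^ n) a]%g.
Proof.
move=> n0 Pn.
have Q1 := q1 pp n0; have Q2 := q1 pp (ltn0Sn n).
have ca := cpa pp na n; have ca' := cpa pp na n.+1.
set o := #[uz (p ^ n) a]%g; set d := #[uz (p ^ n.+1) a]%g.
have o0 : 0 < o by rewrite order_gt0.
have od : o %| d.
  rewrite order_dvdn uzX_eq1 //.
  have := expg_order (uz (p ^ n.+1) a); move/eqP; rewrite uzX_eq1 // => /eqP.
  by move/(cong_pow (leqnSn n)) => ->.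
have dpo : d %| p * o.
  rewrite order_dvdn uzX_eq1 //.
  have := expg_order (uz (p ^ n) a); move/eqP; rewrite uzX_eq1 // => /eqP Ho.
  have ao1 : 1 <= a ^ o by rewrite expn_gt0 a0.
  have : p ^ n %| a ^ o - 1 by rewrite -eqn_mod_dvd // Ho.
  case/dvdnP => c Hc.
  have Eo : a ^ o = 1 + c * p ^ n by move: ao1 Hc; clear; lia.
  have [s Hs] := lte1 c pp op n0.
  by rewrite mulnC expnM Eo Hs addnC modnMDl.
have dno : d != o.
  apply/eqP => Edo.
  have Xx : X (1 + p ^ n).
    apply: Pn; first by rewrite addn_gt0.
    by exists 0; rewrite expn0 -modnDmr modnn addn0.
  have [k [_ _ Hk]] := (let: And3 _ _ H := Xx in H) n.+1.
  have ok : o %| k.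
    rewrite order_dvdn uzX_eq1 //; apply/eqP.
    by rewrite (cong_pow (leqnSn n) Hk) -modnDmr modnn addn0.
  have : (uz (p ^ n.+1) a ^+ k)%g == 1%g by rewrite -order_dvdn -/d Edo.
  rewrite uzX_eq1 // Hk (modn_small Q2) => /eqP.
  have : 2 * p ^ n <= p ^ n * p by rewrite mulnC leq_mul2l prime_gt1 ?orbT.
  move=> H2; rewrite modn_small; first by move: Q1; clear; lia.
  rewrite expnSr; move: H2 Q1; clear; lia.
case/dvdnP: od => e He.
move: dpo; rewrite He [p * o]mulnC [e * o]mulnC dvdn_pmul2l // => ep.
case/primeP: pp => _ /(_ e ep) /orP[/eqP e1|/eqP ep'].
  by move: dno; rewrite He e1 mul1n eqxx.
by rewrite ?ep'.
Qed.

Definition Ind n := #|[set: {unit 'Z_(p ^ n)}] : <[uz (p ^ n) a]>|%g.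

Lemma lagr n : 0 < n -> #[uz (p ^ n) a]%g * Ind n = p.-1 * p ^ n.-1.
Proof.
move=> n0; rewrite /Ind Lagrange; last by apply: finset.subsetT.
rewrite -totient_pfactor // -card_units_Zp //; last by rewrite expn_gt0 prime_gt0.
Qed.

Lemma idx_succ n : 0 < n -> Pre p a n -> Ind n.+1 = Ind n.
Proof.
move=> n0 Pn.
have L1 := lagr n0; have L2 := lagr (ltn0Sn n).
rewrite ord_succ // in L2.
have o0 : 0 < p * #[uz (p ^ n) a]%g by rewrite muln_gt0 prime_gt0 // order_gt0.
apply/eqP; rewrite -(eqn_pmul2l o0) L2 -mulnA L1.
by case: n n0 {L1 L2 Pn o0} => // n _; rewrite expnS mulnCA.
Qed.

Lemma idx_le n m : 0 < n -> Pre p a n -> n <= m -> Ind m = Ind n.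
Proof.
move=> n0 Pn /subnKC <-; elim: (m - n) => [|k IH]; first by rewrite addn0.
rewrite addnS idx_succ ?IH //; first by rewrite ltn_addr.
elim: k {IH} => [|k IHk]; first by rewrite addn0.
by rewrite addnS; apply: pre_succ.
Qed.

End Ord.

Section GT.
Local Open Scope group_scope.
Lemma sub_iff_idx (gT : finGroupType) (x y : gT) : cyclic [set: gT] ->
  (<[x]> \subset <[y]>) = (#|[set: gT] : <[y]>| %| #|[set: gT] : <[x]>|)%N.
Proof.
move=> cT; apply/idP/idP => [sHK | d]; first exact: indexgS.
have LH := Lagrange (finset.subsetT <[x]>).
have LK := Lagrange (finset.subsetT <[y]>).
case/dvdnP: d => c Hc.
have iK0 : (0 < #|[set: gT] : <[y]>|)%N by rewrite indexg_gt0.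
have E : #[y] = (c * #[x])%N.
  apply/eqP; rewrite -(eqn_pmul2r iK0) LK -LH Hc.
  by rewrite mulnA [(c * _)%N]mulnC.
have c0 : (0 < c)%N by move: (order_gt0 y); rewrite E muln_gt0 => /andP[].
have cy : (c %| #[y])%N by rewrite E dvdn_mulr.
have Ho : #[y ^+ c] = #[x] by rewrite orderXdiv // E mulKn.
have := eq_subG_cyclic cT (finset.subsetT <[x]>) (finset.subsetT <[y ^+ c]>).
have -> : (#|<[x]>%G| == #|<[y ^+ c]>%G|) by apply/eqP; exact: (esym Ho).
move=> /eqP ->; exact: cycleX.
Qed.
End GT.

Lemma pre_le p a n m : Pre p a n -> n <= m -> Pre p a m.
Proof.
move=> Pn /subnKC <-; elim: (m - n) => [|k IH]; first by rewrite addn0.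
by rewrite addnS; apply: pre_succ.
Qed.

Lemma adm_exists p a : prime p -> odd p -> 0 < a -> ~~ (p %| a) -> a != 1 ->
  exists n, n_admissible p (adic_closure_pow p a) n.
Proof.
move=> pp op a0 na a1.
have [N [N0 HN]] := stab pp op a0 na a1.
have PN : Pre p a N.
  move=> x x0 Hk; apply/closure_iff => //; split => //; exact: HN Hk.
exists N.+1; apply: pre_adm => //; first exact: pre_succ.
rewrite piX_card // ord_succ // leq_pmulr // order_gt0.
Qed.

Lemma nX_spec p X : (exists n, n_admissible p X n) -> n_admissible p X (nX p X).
Proof.
move=> ex.
have ex' : exists n, `[< n_admissible p X n >] by case: ex => n h; exists n; apply/asboolP.
case: (ex_minnP ex') => m /asboolP Hm Hmin.
have := @xgetPex _ 0 (fun n => n_admissible p X n /\ forall m, n_admissible p X m -> n <= m).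
rewrite /nX; case.
  exists m; split => // k Hk; apply: Hmin; exact/asboolP.
by [].
Qed.

Theorem lemma4p3 (p : nat) (X Y : set nat) :
  prime p -> odd p -> in_calX p X -> in_calX p Y ->
  ((forall x : nat, X x -> Y x) <-> (iX p Y %| iX p X)%N).
Proof.
move=> pp op [a [a0 na a1 ->]] [b [b0 nb b1 ->]].
have hA := nX_spec (adm_exists pp op a0 na a1).
have hB := nX_spec (adm_exists pp op b0 nb b1).
set n1 := nX p (adic_closure_pow p a) in hA *.
set n2 := nX p (adic_closure_pow p b) in hB *.
have n10 : 0 < n1 by case: hA.
have n20 : 0 < n2 by case: hB.
have PA := adm_pre pp a0 na a1 hA; have PB := adm_pre pp b0 nb b1 hB.
set n := maxn n1 n2.
have n0 : 0 < n by rewrite leq_max n10.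
have PAn := pre_le PA (leq_maxl n1 n2).
have PBn := pre_le PB (leq_maxr n1 n2).
have -> : iX p (adic_closure_pow p a) = Ind p a n.
  rewrite /iX -/n1 piXu // -/(Ind p a n1).
  by rewrite (idx_le pp op a0 na n10 PA (leq_maxl n1 n2)).
have -> : iX p (adic_closure_pow p b) = Ind p b n.
  rewrite /iX -/n2 piXu // -/(Ind p b n2).
  by rewrite (idx_le pp op b0 nb n20 PB (leq_maxr n1 n2)).
have Q1 := q1 pp n0.
have ca := cpa pp na n; have cb := cpa pp nb n.
rewrite /Ind -sub_iff_idx; last exact: units_cyc.
split.
  move=> H; rewrite cycle_subG.
  have [_ _ /(_ n) [k [_ _ Hk]]] := H _ (cl_pow pp a0 na a1 (ltn0Sn 0)).
  apply/cycleP; exists k; rewrite -[uz _ a]expg1.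
  by apply/uzX_eq => //; rewrite Hk.
move=> sub x Xx.
have [x0 _ /(_ n) [k [_ _ Hk]]] := Xx.
have : (uz (p ^ n) a ^+ k)%g \in <[uz (p ^ n) b]>%g.
  by apply: (fintype.subsetP sub); exact: mem_cycle.
case/cycleP => j Ej.
apply: (PBn x x0); exists j; rewrite -Hk.
by apply/uzX_eq.
Qed.
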